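(* Let $A_1,\dots,A_5$ be linearly independent symmetric $5\times5$ complex matrices such that $\tilde X=\{([z],[w])\in\mathbb{P}^4\times\mathbb{P}^4:{}^tzA_iw=0,\ i=1,\dots,5\}$ is a smooth threefold. Let $H=\{[y]\in\mathbb{P}^4:\det(\sum y_iA_i)=0\}$ and $U=\{([y],[w])\in H\times\mathbb{P}^4:(\sum y_iA_i)w=0\}$. Then $U$ is smooth. *)

(* Defs.v *)
From HB Require Import structures.
From mathcomp Require Import all_boot all_order all_algebra.
From mathcomp Require Import complex.
From mathcomp Require Import Rstruct.
Set Implicit Arguments. Unset Strict Implicit. Unset Printing Implicit Defensive.
Import GRing.Theory.
Local Open Scope ring_scope.

Definition CC : fieldType := complex Rdefinitions.R.

Section Web.
Variable F : fieldType.
Variable A : 'I_5 -> 'M[F]_5.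

Definition pencil (y : 'cV[F]_5) : 'M[F]_5 := \sum_(i < 5) y i 0 *: A i.

(* Points of X~ (in affine-cone coordinates; all conditions are
   bihomogeneous so they only depend on ([z],[w]) in P^4 x P^4). *)
Definition in_Xt (z w : 'cV[F]_5) : Prop :=
  z != 0 /\ w != 0 /\ forall i, (z^T *m A i *m w) 0 0 = 0.

(* Jacobian (on the affine cone C^5 x C^5) of the 5 defining equations
   f_i(z,w) = z^T A_i w at (z,w): (u,v) |-> (u^T A_i w + z^T A_i v)_i. *)
Definition jac_Xt (z w : 'cV[F]_5) : 'M[F]_(5, 5 + 5) :=
  row_mx (\matrix_(i < 5, j < 5) (A i *m w) j 0)
         (\matrix_(i < 5, j < 5) (z^T *m A i) 0 j).

(* X~ is a smooth threefold: nonempty and at every point the Zariski tangent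
   space of the scheme cut out by the 5 equations has (projective) dimension
   3, i.e. the cone tangent space has dimension 10 - rank = 5 = 3 + 2. *)
Definition Xt_smooth_threefold : Prop :=
  (exists z w, in_Xt z w) /\
  forall z w, in_Xt z w -> \rank (jac_Xt z w) = 5%N.

Definition in_H (y : 'cV[F]_5) : Prop := y != 0 /\ \det (pencil y) = 0.
Definition in_U (y w : 'cV[F]_5) : Prop :=
  in_H y /\ w != 0 /\ pencil y *m w = 0.

(* Jacobian of the defining equations of U inside P^4 x P^4:
   det(sum y_i A_i) = 0 (defining H) and (sum y_i A_i) w = 0.
   d det at y in direction a is tr(adj(pencil y) * pencil a);
   d ((pencil y) w) in direction (a,v) is pencil a * w + pencil y * v. *)
Definition jac_U (y w : 'cV[F]_5) : 'M[F]_(1 + 5, 5 + 5) :=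
  col_mx
    (row_mx (\matrix_(i < 1, k < 5) \tr (\adj (pencil y) *m A k)) 0)
    (row_mx (\matrix_(i < 5, k < 5) (A k *m w) i 0) (pencil y)).

(* U is smooth (of dimension 3 = dim U): at every point the Zariski tangent
   space of the scheme U has projective dimension 3. *)
Definition U_smooth : Prop :=
  forall y w, in_U y w -> \rank (jac_U y w) = 5%N.

End Web.

(* Main.v *)
Require Import Defs.
From mathcomp Require Import all_boot all_order all_algebra.
Import GRing.Theory.
Local Open Scope ring_scope.
Set Implicit Arguments. Unset Strict Implicit.

Section Aux.
Variable F : fieldType.

Lemma rank_fullP m n (B : 'M[F]_(m,n)) :
  \rank B = m <-> (forall u : 'rV_m, u *m B = 0 -> u = 0).
Proof.
split.
- move=> rB u uB.
  have k0 : kermx B = 0 by apply/eqP; rewrite -mxrank_eq0 mxrank_ker rB subnn.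
  have : (u <= kermx B)%MS by apply/sub_kermxP.
  by rewrite k0 submx0 => /eqP.
- move=> H.
  have k0 : kermx B = 0.
    apply/eqP; rewrite -nz_row_eq0; apply/eqP/H; apply/sub_kermxP/nz_row_sub.
  have := mxrank_ker B; rewrite k0 mxrank0 => /eqP; rewrite eq_sym subn_eq0 => h.
  by apply/eqP; rewrite eqn_leq rank_leq_row h.
Qed.

Lemma rank_row' m n i (X : 'M[F]_(m,n)) : (\rank (row' i X) <= \rank X)%N.
Proof. by rewrite row'Esub rowsubE mxrankM_maxr. Qed.

Lemma rank_col' m n j (X : 'M[F]_(m,n)) : (\rank (col' j X) <= \rank X)%N.
Proof. by rewrite -mxrank_tr tr_col' -[X in (_ <= X)%N]mxrank_tr rank_row'. Qed.

Lemma adj_small n (P : 'M[F]_n.+1) : (\rank P < n)%N -> \adj P = 0.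
Proof.
move=> hr; apply/matrixP => i j; rewrite !mxE /cofactor.
apply/eqP; rewrite mulf_eq0; apply/orP; right; apply/eqP.
apply: contraTeq hr => hd; rewrite -leqNgt.
have : row' j (col' i P) \in unitmx by rewrite unitmxE unitfE.
move/mxrank_unit => /= e; rewrite -{1}e.
exact: leq_trans (rank_row' _ _) (rank_col' _ _).
Qed.

Lemma adj_rank1 n (P : 'M[F]_n.+1) (w : 'cV_n.+1) :
  \det P = 0 -> w != 0 -> P *m w = 0 -> exists d : 'rV_n.+1, \adj P = w *m d.
Proof.
move=> dP w0 Pw.
case: (ltnP (\rank P) n) => hr.
  by exists 0; rewrite adj_small // mulmx0.
have rP : \rank P = n.
  apply/eqP; rewrite eqn_leq hr andbT -ltnS.
  rewrite ltn_neqAle rank_leq_row andbT.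
  apply/negP => /eqP e.
  have : P \in unitmx by rewrite -row_free_unit /row_free e.
  by rewrite unitmxE unitfE dP eqxx.
have Q0 : (\adj P)^T *m P^T = 0.
  by rewrite -trmx_mul mul_mx_adj dP raddf0 trmx0.
have W0 : w^T *m P^T = 0 by rewrite -trmx_mul Pw trmx0.
have sW : (w^T <= kermx P^T)%MS by apply/sub_kermxP.
have sQ : ((\adj P)^T <= kermx P^T)%MS by apply/sub_kermxP.
have rW : \rank w^T = 1%N.
  apply/eqP; rewrite eqn_leq rank_leq_row lt0n mxrank_eq0 trmx_eq0 w0.
  by [].
have rK : \rank (kermx P^T) = 1%N by rewrite mxrank_ker mxrank_tr rP subSnn.
have sK : (kermx P^T <= w^T)%MS.
  have := mxrank_leqif_sup sW; rewrite rW rK => -[_ <-]; by [].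
have := submx_trans sQ sK => /submxP [D hD].
exists D^T.
by rewrite -[LHS]trmxK hD trmx_mul trmxK.
Qed.

End Aux.

Theorem claim3p7 (A : 'I_5 -> 'M[CC]_5) :
  (forall i, (A i)^T = A i) ->
  (forall c : 'I_5 -> CC, \sum_(i < 5) c i *: A i = 0 -> forall i, c i = 0) ->
  Xt_smooth_threefold A ->
  U_smooth A.
Proof.
move=> Asym Aind [_ HX] y w [[y0 dety] [w0 Pw]].
set P := pencil A y in dety Pw *.
set M := \matrix_(i < 5, k < 5) (A k *m w) i 0.
have rB : \rank (row_mx M P) = 5%N.
  apply/rank_fullP => u uB; rewrite mul_mx_row -row_mx0 in uB.
  case/eq_row_mx: uB => uM uP.
  apply/eqP; apply: contraT => u0.
  have Xt : in_Xt A u^T w.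
    split; first by rewrite trmx_eq0.
    split=> // i; rewrite trmxK.
    have := congr1 (fun X : 'M[CC]_(1,5) => X 0 i) uM => /=; rewrite [RHS]mxE => h; apply: (etrans _ h).
    rewrite -mulmxA mxE [RHS]mxE; apply: eq_bigr => j _; rewrite mxE.
    by rewrite /M !mxE.
  have := HX _ _ Xt => /rank_fullP H.
  have : y^T = 0.
    apply: H; rewrite /jac_Xt mul_mx_row trmxK.
    have -> : y^T *m (\matrix_(i < 5, j < 5) (A i *m w) j 0) = 0.
      apply/matrixP => a j; rewrite (ord1 a) [RHS]mxE mxE.
      have := congr1 (fun X : 'M[CC]_(5,1) => X j 0) Pw => /=.
      rewrite /P /pencil mulmx_suml.
      rewrite (@summxE _ _ _ _ (index_enum _) xpredT (fun i => y i 0 *: A i *m w)) [RHS]mxE => h; apply: (etrans _ h).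
      by apply: eq_bigr => i _; rewrite -scalemxAl !mxE.
    have -> : y^T *m (\matrix_(i < 5, j < 5) (u *m A i) 0 j) = 0.
      apply/matrixP => a j; rewrite (ord1 a) [RHS]mxE mxE.
      have := congr1 (fun X : 'M[CC]_(1,5) => X 0 j) uP => /=.
      rewrite /P /pencil mulmx_sumr (@summxE _ _ _ _ (index_enum _) xpredT (fun i => u *m (y i 0 *: A i))) [RHS]mxE => h; apply: (etrans _ h).
      by apply: eq_bigr => i _; rewrite -scalemxAr !mxE.
    by rewrite row_mx0.
  by move/eqP; rewrite trmx_eq0 (negbTE y0).
have [d hd] := adj_rank1 dety w0 Pw.
have dP : d *m P = 0.
  have : w *m (d *m P) = 0 by rewrite mulmxA -hd mul_adj_mx dety raddf0.
  have [j wj] : exists j, w j 0 != 0.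
    apply/existsP; apply: contraT => /existsPn hw; case/eqP: w0.
    apply/matrixP => a b; rewrite (ord1 b) [RHS]mxE.
    by apply/eqP; apply/negPn; exact: hw.
  move=> h; apply/matrixP => a k; rewrite (ord1 a) [RHS]mxE.
  have := congr1 (fun X : 'M[CC]_5 => X j k) h => /=; rewrite [RHS]mxE mxE big_ord1.
  by move=> e; apply: (mulfI wj); rewrite mulr0.
have top : \matrix_(i < 1, k < 5) \tr (\adj P *m A k) = d *m M.
  apply/matrixP => i k; rewrite (ord1 i) [LHS]mxE hd -mulmxA mxtrace_mulC.
  rewrite /mxtrace big_ord1 -mulmxA [LHS]mxE [RHS]mxE.
  by apply: eq_bigr => j _; rewrite [in RHS]mxE.
have eJ : jac_U A y w = col_mx d 1%:M *m row_mx M P.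
  by rewrite mul_col_mx mul1mx mul_mx_row dP -top.
apply/eqP; rewrite eqn_leq; apply/andP; split.
  by rewrite eJ -[X in (_ <= X)%N]rB mxrankM_maxr.
rewrite -[X in (X <= _)%N]rB.
have -> : row_mx M P = row_mx 0 1%:M *m jac_U A y w.
  by rewrite eJ mulmxA mul_row_col mul0mx add0r !mul1mx.
exact: mxrankM_maxr.
Qed.
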